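(* There is no uncountable set $\mathcal{S}$ of Turing degrees such that $\mathbb{R}_{\mathcal{S}}$ is $|\mathcal{S}|$-$2$-entangled.
   Context: $\mathbb{R}_{\mathcal{S}}$ is the set of reals whose Turing degree lies in $\mathcal{S}$. For $\aleph_0<\kappa\le 2^{\aleph_0}$, a set $A\subseteq\mathbb{R}$ is $\kappa$-$2$-entangled if $|A|\ge\kappa$ and for every collection of $\kappa$ many pairwise disjoint pairs of elements of $A$ (pairs $(x_\alpha,y_\alpha)$ with $x_\alpha\ne y_\alpha$ and $\{x_\alpha,y_\alpha\}\cap\{x_\beta,y_\beta\}=\emptyset$ for $\alpha\ne\beta$) there are pairs $(x_1,y_1),(x_2,y_2)$ in the collection with $x_1<x_2,y_1<y_2$ and pairs $(w_1,z_1),(w_2,z_2)$ in the collection with $w_1<w_2$, $z_1>z_2$. *)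

(* Defs.v *)
(* reals are an abstract realType (every realType is
   isomorphic to the usual reals). *)
From HB Require Import structures.
From mathcomp Require Import all_boot all_order all_algebra.
From mathcomp Require Import reals.
Set Implicit Arguments. Unset Strict Implicit. Unset Printing Implicit Defensive.
Import Order.TTheory GRing.Theory Num.Theory.

(* Oracle partial recursive functions (Kleene), with oracle O : nat -> bool.
   Arguments are passed as a list; missing arguments default to 0.       *)
Inductive prog : Type :=
| PZero : prog
| PSucc : prog
| PProj : nat -> prog
| POracle : prog
| PComp : prog -> list prog -> prog
| PPrim : prog -> prog -> prog
| PMu : prog -> prog.

Inductive eval (O : nat -> bool) : prog -> seq nat -> nat -> Prop :=
| eZero v : eval O PZero v 0
| eSucc v : eval O PSucc v (head 0 v).+1
| eProj i v : eval O (PProj i) v (nth 0 v i)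
| eOracle v : eval O POracle v (if O (head 0 v) then 1 else 0)
| eComp f gs v ws r :
    evals O gs v ws -> eval O f ws r -> eval O (PComp f gs) v r
| ePrim0 f g v r : eval O f v r -> eval O (PPrim f g) (0 :: v) r
| ePrimS f g n v r r' :
    eval O (PPrim f g) (n :: v) r -> eval O g (n :: r :: v) r' ->
    eval O (PPrim f g) (n.+1 :: v) r'
| eMu f v n :
    eval O f (n :: v) 0 ->
    (forall m, m < n -> exists k, eval O f (m :: v) k.+1) ->
    eval O (PMu f) v n
with evals (O : nat -> bool) : list prog -> seq nat -> seq nat -> Prop :=
| esNil v : evals O [::] v [::]
| esCons g gs v w ws : eval O g v w -> evals O gs v ws -> evals O (g :: gs) v (w :: ws).

Definition turing_le (A B : nat -> bool) : Prop :=
  exists p : prog, forall n, eval B p [:: n] (if A n then 1 else 0).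

Definition turing_eq (A B : nat -> bool) : Prop := turing_le A B /\ turing_le B A.

(* A set of Turing degrees is represented by the (degree-invariant) union of
   the degrees it contains, i.e. a predicate on sets of naturals closed
   under Turing equivalence. *)
Definition degree_invariant (S : (nat -> bool) -> Prop) : Prop :=
  forall A B, turing_eq A B -> S A -> S B.

(* J has the same cardinality as the set of degrees in S:
   a bijection between J and the degrees of S, given by representatives. *)
Definition equipotent_degrees (J : Type) (S : (nat -> bool) -> Prop) : Prop :=
  exists f : J -> (nat -> bool),
    [/\ forall j, S (f j),
        forall j k, turing_eq (f j) (f k) -> j = k
      & forall A, S A -> exists j, turing_eq (f j) A].

Definition countable_degrees (S : (nat -> bool) -> Prop) : Prop :=
  exists g : (nat -> bool) -> nat,
    forall A B, S A -> S B -> g A = g B -> turing_eq A B.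

(* The Turing degree of a real x is the degree of its left Dedekind cut
   {q in Q | q < x}, coded as a set of naturals via the canonical
   enumeration of rat. *)
Definition real_code (R : realType) (x : R) : nat -> bool :=
  fun n => match (unpickle n : option rat) with
           | Some q => (ratr q < x)%R
           | None => false
           end.

Definition reals_in_degrees (R : realType) (S : (nat -> bool) -> Prop) (x : R) : Prop :=
  S (real_code x).

(* A is kappa-2-entangled, with kappa = |S| given as "equipotent to the
   degrees of S":  |A| >= kappa, and every collection of kappa many
   pairwise disjoint pairs of distinct elements of A contains an
   increasing and a decreasing couple of pairs. *)
Definition entangled2 (R : realType) (S : (nat -> bool) -> Prop) (A : R -> Prop) : Prop :=
  (exists (I : Type) (e : I -> R),
      equipotent_degrees I S /\ (forall i, A (e i)) /\ injective e) /\
  (forall (J : Type) (x y : J -> R),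
      equipotent_degrees J S ->
      (forall a, A (x a) /\ A (y a) /\ x a <> y a) ->
      (forall a b, a <> b ->
         [/\ x a <> x b, x a <> y b, y a <> x b & y a <> y b]) ->
      (exists a b, (x a < x b)%R /\ (y a < y b)%R) /\
      (exists a b, (x a < x b)%R /\ (y b < y a)%R)).

(* Main.v *)
Require Import Defs.
From mathcomp Require Import all_boot all_order all_algebra.
From mathcomp Require Import reals.
From mathcomp Require Import zify ring lra.
Set Implicit Arguments. Unset Strict Implicit. Unset Printing Implicit Defensive.

(* Proof idea: the maps F(x) = -1/H(x) and H(x), with
   H(x) = x+1 (x >= 0), 1/(1-x) (x < 0), preserve the Turing degree of the
   left Dedekind cut (we build explicit oracle Kleene programs), are strictly
   increasing and have disjoint ranges; so the pairs (F(e i), H(e i)) never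
   form a decreasing couple. *)

Section Comp.
Context {O : nat -> bool}.

Definition tp k (v : seq nat) := mkseq (fun i => nth 0 v i) k.

Lemma size_tp k v : size (tp k v) = k.
Proof. by rewrite size_mkseq. Qed.

Lemma tp_id k v : size v = k -> tp k v = v.
Proof.
move=> Hs; apply: (@eq_from_nth _ 0); first by rewrite size_tp.
by move=> i; rewrite size_tp => Hi; rewrite nth_mkseq.
Qed.

Lemma nth_tp k v i : i < k -> nth 0 (tp k v) i = nth 0 v i.
Proof. by move=> Hi; rewrite nth_mkseq. Qed.

Lemma tpS k v : tp k.+1 v = nth 0 v 0 :: tp k (behead v).
Proof.
apply: (@eq_from_nth _ 0); first by rewrite size_tp /= size_tp.
rewrite size_tp => -[|i] Hi; first by rewrite nth_tp.
rewrite [LHS]nth_tp //= nth_tp; first by case: v => [|a v] /=; rewrite ?nth_nil.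
exact: Hi.
Qed.

Definition CFn k (f : seq nat -> nat) := exists p, forall v, eval O p v (f (tp k v)).

Lemma CFn_ext k f g : CFn k f -> (forall v, size v = k -> f v = g v) -> CFn k g.
Proof. by move=> [p Hp] H; exists p => v; rewrite -H ?size_tp. Qed.

Lemma CFn_proj k i : i < k -> CFn k (fun v => nth 0 v i).
Proof. by move=> Hi; exists (PProj i) => v; rewrite nth_tp //; constructor. Qed.

Lemma CFn_zero k : CFn k (fun _ => 0).
Proof. by exists PZero => v; constructor. Qed.

Lemma CF_succ : CFn 1 (fun v => (nth 0 v 0).+1).
Proof. exists PSucc => v; rewrite nth_tp //; case: v => [|a v]; exact: eSucc. Qed.

Lemma CF_oracle : CFn 1 (fun v => nat_of_bool (O (nth 0 v 0))).
Proof.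
exists POracle => v; rewrite nth_tp //.
have -> : nat_of_bool (O (nth 0 v 0)) = (if O (head 0 v) then 1 else 0).
  by case: v => [|a v] /=; case: (O _).
exact: eOracle.
Qed.

Fixpoint AllCF k (gs : seq (seq nat -> nat)) : Prop :=
  match gs with [::] => True | g :: gs' => CFn k g /\ AllCF k gs' end.

Lemma evals_of k gs : AllCF k gs ->
  exists ps, forall v, evals O ps v (map (fun g => g (tp k v)) gs).
Proof.
elim: gs => [|g gs IH] /=; first by exists [::] => v; constructor.
move=> [[p Hp] /IH [ps Hps]]; exists (p :: ps) => v; constructor; [exact: Hp|exact: Hps].
Qed.

Lemma CFn_comp k m f gs : CFn m f -> size gs = m -> AllCF k gs ->
  CFn k (fun v => f (map (fun g => g v) gs)).
Proof.
move=> [pf Hf] Hs /evals_of [ps Hps]; exists (PComp pf ps) => v.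
apply: eComp (Hps v) _.
have := Hf (map (fun g => g (tp k v)) gs); rewrite [tp m _]tp_id ?size_map //.
Qed.

Lemma evals_projs v j s : evals O (map PProj (iota s j)) v (map (nth 0 v) (iota s j)).
Proof. elim: j s => [|j IH] s /=; constructor; [constructor | exact: IH]. Qed.

Definition primr (f g : seq nat -> nat) (ys : seq nat) (n : nat) : nat :=
  nat_rec (fun _ => nat) (f ys) (fun n r => g [:: n, r & ys]) n.

Lemma CFn_prim k f g : CFn k f -> CFn k.+2 g ->
  CFn k.+1 (fun v => primr f g (behead v) (nth 0 v 0)).
Proof.
move=> [pf Hf] [pg Hg].
have Hrec : forall n ys, size ys = k -> eval O (PPrim pf pg) (n :: ys) (primr f g ys n).
  move=> n ys Hs; elim: n => [|n IH].
    by apply: ePrim0; have := Hf ys; rewrite tp_id.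
  apply: ePrimS IH _; have := Hg [:: n, primr f g ys n & ys]; rewrite tp_id //=.
  by rewrite Hs.
exists (PComp (PPrim pf pg) (map PProj (iota 0 k.+1))) => v.
apply: eComp (evals_projs v k.+1 0) _.
have -> : map (nth 0 v) (iota 0 k.+1) = tp k.+1 v by [].
rewrite tpS /=; apply: Hrec; exact: size_tp.
Qed.

Lemma CFn_mu k g h : CFn k.+1 g ->
  (forall v, size v = k -> g (h v :: v) = 0 /\ forall m, m < h v -> g (m :: v) <> 0) ->
  CFn k h.
Proof.
move=> [pg Hg] H; exists (PMu pg) => v.
have [H0 H1] := H (tp k v) (size_tp k v).
apply: eMu.
  have := Hg (h (tp k v) :: v); rewrite tpS /= H0; exact.
move=> m /H1; have := Hg (m :: v); rewrite tpS /=.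
case: (g _) => // k' Hk' _; by exists k'.
Qed.

Definition CF1 (F : nat -> nat) := CFn 1 (fun v => F (nth 0 v 0)).
Definition CF2 (F : nat -> nat -> nat) := CFn 2 (fun v => F (nth 0 v 0) (nth 0 v 1)).
Definition CF3 (F : nat -> nat -> nat -> nat) :=
  CFn 3 (fun v => F (nth 0 v 0) (nth 0 v 1) (nth 0 v 2)).

Lemma app1 k F g : CF1 F -> CFn k g -> CFn k (fun v => F (g v)).
Proof. move=> HF Hg; exact: (@CFn_comp k 1 _ [:: g] HF erefl (conj Hg I)). Qed.

Lemma app2 k F g1 g2 : CF2 F -> CFn k g1 -> CFn k g2 -> CFn k (fun v => F (g1 v) (g2 v)).
Proof. move=> HF H1 H2; exact: (@CFn_comp k 2 _ [:: g1; g2] HF erefl (conj H1 (conj H2 I))). Qed.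

Lemma app3 k F g1 g2 g3 : CF3 F -> CFn k g1 -> CFn k g2 -> CFn k g3 ->
  CFn k (fun v => F (g1 v) (g2 v) (g3 v)).
Proof. move=> HF H1 H2 H3; exact: (@CFn_comp k 3 _ [:: g1; g2; g3] HF erefl (conj H1 (conj H2 (conj H3 I)))). Qed.

Lemma CFn_const k c : CFn k (fun _ => c).
Proof.
elim: c => [|c IH]; first exact: CFn_zero.
exact: (app1 (F := S) CF_succ IH).
Qed.

Lemma CFn_succ k g : CFn k g -> CFn k (fun v => (g v).+1).
Proof. exact: (app1 (F := S) CF_succ). Qed.

Lemma CFn_oracle k g : CFn k g -> CFn k (fun v => nat_of_bool (O (g v))).
Proof. exact: (app1 (F := fun n => nat_of_bool (O n)) CF_oracle). Qed.

Lemma CF_add : CF2 addn.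
Proof.
have H := @CFn_prim 1 (fun v => nth 0 v 0) (fun w => (nth 0 w 1).+1)
  (CFn_proj (ltnSn 0)) (CFn_succ (CFn_proj (isT : 1 < 3))).
red; apply: (CFn_ext H) => -[|a [|b [|]]] //= _.
by elim: a => //= a ->.
Qed.

Lemma CF_mul : CF2 muln.
Proof.
have H := @CFn_prim 1 (fun _ => 0) (fun w => nth 0 w 1 + nth 0 w 2)
  (CFn_zero _) (app2 CF_add (CFn_proj (isT : 1 < 3)) (CFn_proj (isT : 2 < 3))).
red; apply: (CFn_ext H) => -[|a [|b [|]]] //= _.
by elim: a => //= a ->; rewrite mulSn addnC.
Qed.

Lemma CF_pow2 : CF1 (fun n => 2 ^ n).
Proof.
have H := @CFn_prim 0 (fun _ => 1) (fun w => nth 0 w 1 + nth 0 w 1)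
  (CFn_const _ _) (app2 CF_add (CFn_proj (isT : 1 < 2)) (CFn_proj (isT : 1 < 2))).
red; apply: (CFn_ext H) => -[|a [|]] //= _.
by elim: a => //= a ->; rewrite expnS mul2n addnn.
Qed.

Lemma CF_pred : CF1 predn.
Proof.
have H := @CFn_prim 0 (fun _ => 0) (fun w => nth 0 w 0) (CFn_zero _) (CFn_proj (isT : 0 < 2)).
red; apply: (CFn_ext H) => -[|a [|]] //= _; by case: a.
Qed.

Lemma CF_subr : CF2 (fun b a => a - b).
Proof.
have H := @CFn_prim 1 (fun v => nth 0 v 0) (fun w => (nth 0 w 1).-1)
  (CFn_proj (ltnSn 0)) (app1 CF_pred (CFn_proj (isT : 1 < 3))).
red; apply: (CFn_ext H) => -[|a [|b [|]]] //= _.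
by elim: a => //= [|a ->]; rewrite ?subn0 // subnS.
Qed.

Lemma CF_sub : CF2 subn.
Proof. exact: (app2 CF_subr (CFn_proj (isT : 1 < 2)) (CFn_proj (isT : 0 < 2))). Qed.

Lemma CF_iszero : CF1 (fun n => nat_of_bool (n == 0)).
Proof.
have H := @CFn_prim 0 (fun _ => 1) (fun _ => 0) (CFn_const _ _) (CFn_zero _).
red; apply: (CFn_ext H) => -[|a [|]] //= _; by case: a.
Qed.

Definition cond (c x y : nat) := if c is 0 then y else x.

Lemma CF_cond : CF3 cond.
Proof.
have H := @CFn_prim 2 (fun v => nth 0 v 1) (fun w => nth 0 w 2)
  (CFn_proj (isT : 1 < 2)) (CFn_proj (isT : 2 < 4)).
red; apply: (CFn_ext H) => -[|c [|x [|y [|]]]] //= _; by case: c.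
Qed.

End Comp.

Section Comp2.
Context {O : nat -> bool}.
Local Notation CFn := (@CFn O).

Lemma CFn_add k g1 g2 : CFn k g1 -> CFn k g2 -> CFn k (fun v => g1 v + g2 v).
Proof. exact: (app2 (F := addn) CF_add). Qed.
Lemma CFn_mul k g1 g2 : CFn k g1 -> CFn k g2 -> CFn k (fun v => g1 v * g2 v).
Proof. exact: (app2 (F := muln) CF_mul). Qed.
Lemma CFn_sub k g1 g2 : CFn k g1 -> CFn k g2 -> CFn k (fun v => g1 v - g2 v).
Proof. exact: (app2 (F := subn) CF_sub). Qed.
Lemma CFn_pow2 k g : CFn k g -> CFn k (fun v => 2 ^ g v).
Proof. exact: (app1 (F := fun n => 2 ^ n) CF_pow2). Qed.
Lemma CFn_eq0 k g : CFn k g -> CFn k (fun v => nat_of_bool (g v == 0)).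
Proof. exact: (app1 (F := fun n => nat_of_bool (n == 0)) CF_iszero). Qed.

Lemma CFn_if k (c : seq nat -> bool) X Y : CFn k (fun v => nat_of_bool (c v)) ->
  CFn k X -> CFn k Y -> CFn k (fun v => if c v then X v else Y v).
Proof.
move=> Hc HX HY; have H := app3 CF_cond Hc HX HY. apply: (CFn_ext H) => v _.
by case: (c v).
Qed.

Lemma CFn_leq k g1 g2 : CFn k g1 -> CFn k g2 -> CFn k (fun v => nat_of_bool (g1 v <= g2 v)).
Proof.
move=> H1 H2; have Hx := (CFn_eq0 (CFn_sub H1 H2)); apply: (CFn_ext Hx) => v _; by rewrite subn_eq0.
Qed.

Lemma CFn_andb k (c1 c2 : seq nat -> bool) : CFn k (fun v => nat_of_bool (c1 v)) ->
  CFn k (fun v => nat_of_bool (c2 v)) -> CFn k (fun v => nat_of_bool (c1 v && c2 v)).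
Proof.
move=> H1 H2; have Hx := (CFn_if H1 H2 (CFn_const k 0)); apply: (CFn_ext Hx) => v _; by case: (c1 v).
Qed.

Lemma CFn_orb k (c1 c2 : seq nat -> bool) : CFn k (fun v => nat_of_bool (c1 v)) ->
  CFn k (fun v => nat_of_bool (c2 v)) -> CFn k (fun v => nat_of_bool (c1 v || c2 v)).
Proof.
move=> H1 H2; have Hx := (CFn_if H1 (CFn_const k 1) H2); apply: (CFn_ext Hx) => v _; by case: (c1 v).
Qed.

Lemma CFn_negb k (c : seq nat -> bool) : CFn k (fun v => nat_of_bool (c v)) ->
  CFn k (fun v => nat_of_bool (~~ c v)).
Proof.
move=> H; have Hx := (CFn_if H (CFn_const k 0) (CFn_const k 1)); apply: (CFn_ext Hx) => v _; by case: (c v).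
Qed.

Lemma CFn_eqn k g1 g2 : CFn k g1 -> CFn k g2 -> CFn k (fun v => nat_of_bool (g1 v == g2 v)).
Proof.
move=> H1 H2; have Hx := (CFn_andb (CFn_leq H1 H2) (CFn_leq H2 H1)); apply: (CFn_ext Hx) => v _.
by rewrite eqn_leq.
Qed.

Lemma CFn_bool k (b : bool) : CFn k (fun _ => nat_of_bool b).
Proof. exact: CFn_const. Qed.

Lemma AllCF_projs k s : all (fun j => j < k) s ->
  @AllCF O k (map (fun j (w : seq nat) => nth 0 w j) s).
Proof.
elim: s => //= j s IH /andP [Hj Hs]; split; [exact: CFn_proj | exact: IH].
Qed.

Lemma CFn_shift k N : CFn k N -> CFn k.+1 (fun w => N (behead w)).
Proof.
move=> HN.
have H := @CFn_comp O k.+1 k N (map (fun j (w : seq nat) => nth 0 w j) (iota 1 k)) HN.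
rewrite size_map size_iota in H.
have HA : @AllCF O k.+1 (map (fun j (w : seq nat) => nth 0 w j) (iota 1 k)).
  apply: AllCF_projs; apply/allP => j; rewrite mem_iota; lia.
have Hx := (H erefl HA); apply: (CFn_ext Hx) => -[|a w] //= Hs; congr N.
rewrite -map_comp; apply: (@eq_from_nth _ 0); first by rewrite size_map size_iota; case: Hs.
move=> i; rewrite size_map size_iota => Hi.
rewrite (nth_map 0) ?size_iota // nth_iota //=.
Qed.

Lemma CFn_find k (P : nat -> seq nat -> bool) N :
  CFn k.+1 (fun w => nat_of_bool (P (nth 0 w 0) (behead w))) -> CFn k N ->
  CFn k (fun v => find (fun i => P i v) (iota 0 (N v))).
Proof.
move=> HP HN.
pose g := fun w : seq nat => if (N (behead w) <= nth 0 w 0) || P (nth 0 w 0) (behead w) then 0 else 1.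
have Hg : CFn k.+1 g.
  apply: CFn_if; last exact: CFn_const; last exact: CFn_const.
  apply: CFn_orb HP; apply: CFn_leq; [exact: CFn_shift | exact: CFn_proj].
apply: (CFn_mu Hg) => v _; rewrite /g /=; split.
  set j := find _ _.
  have := find_size (fun i => P i v) (iota 0 (N v)); rewrite size_iota -/j leq_eqVlt.
  case/orP => [/eqP -> | Hj]; first by rewrite leqnn.
  have Hh : has (fun i => P i v) (iota 0 (N v)) by rewrite has_find size_iota.
  have := nth_find 0 Hh; rewrite -/j nth_iota // add0n => ->; by rewrite orbT.
move=> m Hm.
have HmN : m < N v.
  apply: (leq_trans Hm); have := find_size (fun i => P i v) (iota 0 (N v)); by rewrite size_iota.
have := before_find 0 Hm; rewrite nth_iota // add0n => ->.
by rewrite orbF leqNgt HmN.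
Qed.

Lemma CFn_has k (P : nat -> seq nat -> bool) N :
  CFn k.+1 (fun w => nat_of_bool (P (nth 0 w 0) (behead w))) -> CFn k N ->
  CFn k (fun v => nat_of_bool (has (fun i => P i v) (iota 0 (N v)))).
Proof.
move=> HP HN; have Hx := (CFn_leq (CFn_succ (CFn_find HP HN)) HN); apply: (CFn_ext Hx) => v _.
by rewrite has_find size_iota.
Qed.

End Comp2.

Section Comp3.
Context {O : nat -> bool}.
Local Notation CFn := (@CFn O).

Lemma CFn_double k g : CFn k g -> CFn k (fun v => (g v).*2).
Proof. move=> H; have Hx := CFn_add H H; apply: (CFn_ext Hx) => v _; by rewrite addnn. Qed.

Lemma CFn_projb k j : j.+1 < k -> CFn k (fun w => nth 0 (behead w) j).
Proof. move=> H; have Hx := @CFn_proj O k j.+1 H; apply: (CFn_ext Hx) => -[|a w] _ //=; by rewrite nth_nil. Qed.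

Lemma CFn_projbb k j : j.+2 < k -> CFn k (fun w => nth 0 (behead (behead w)) j).
Proof. move=> H; have Hx := @CFn_proj O k j.+2 H; apply: (CFn_ext Hx) => -[|a [|b w]] _ //=; by rewrite nth_nil. Qed.

Lemma CFn_projbbb k j : j.+3 < k -> CFn k (fun w => nth 0 (behead (behead (behead w))) j).
Proof. move=> H; have Hx := @CFn_proj O k j.+3 H; apply: (CFn_ext Hx) => -[|a [|b [|c w]]] _ //=; by rewrite nth_nil. Qed.

End Comp3.

Ltac cf1 := lazymatch goal with
 | |- CFn _ (fun _ => nth 0 _ _) =>
     first [ apply: CFn_proj; done | apply: CFn_projb; done | apply: CFn_projbb; done
           | apply: CFn_projbbb; done | apply: CFn_const ]
 | |- CFn _ (fun _ => if _ then _ else _) => apply: CFn_if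
 | |- CFn _ (fun _ => nat_of_bool (_ && _)) => apply: CFn_andb
 | |- CFn _ (fun _ => nat_of_bool (_ || _)) => apply: CFn_orb
 | |- CFn _ (fun _ => nat_of_bool (~~ _)) => apply: CFn_negb
 | |- CFn _ (fun _ => nat_of_bool (_ <= _)) => apply: CFn_leq
 | |- CFn _ (fun _ => nat_of_bool (_ == _)) => apply: CFn_eqn
 | |- CFn _ (fun _ => nat_of_bool (has _ (iota 0 _))) => apply: CFn_has
 | |- CFn _ (fun _ => find _ (iota 0 _)) => apply: CFn_find
 | |- CFn _ (fun _ => _ + _) => apply: CFn_add
 | |- CFn _ (fun _ => _ * _) => apply: CFn_mul
 | |- CFn _ (fun _ => _ - _) => apply: CFn_sub
 | |- CFn _ (fun _ => 2 ^ _) => apply: CFn_pow2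
 | |- CFn _ (fun _ => _.*2) => apply: CFn_double
 | |- CFn _ (fun _ => _.+1) => apply: CFn_succ
 | |- CFn _ (fun _ => _) => apply: CFn_const
 end.
Ltac cf := repeat (cbv beta; cf1).

Import CodeSeq.

Definition sp1 m := head 0 (decode m).
Definition sp2 m := code (behead (decode m)).

Lemma code_cons v s : code (v :: s) = 2 ^ v * (code s).*2.+1.
Proof. by []. Qed.

Lemma decode_sp m : 0 < m -> decode m = sp1 m :: decode (sp2 m).
Proof.
move=> Hm; rewrite /sp1 /sp2 codeK.
case E: (decode m) => [|a s] //.
by move: Hm; rewrite -(decodeK m) E.
Qed.

Lemma sp_spec m : 0 < m -> m = 2 ^ sp1 m * (sp2 m).*2.+1.
Proof.
move=> Hm; rewrite -{1}(decodeK m) decode_sp // code_cons decodeK //.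
Qed.

Lemma sp_uniq v w : sp1 (2 ^ v * w.*2.+1) = v /\ sp2 (2 ^ v * w.*2.+1) = w.
Proof.
have E : 2 ^ v * w.*2.+1 = code (v :: decode w) by rewrite code_cons decodeK.
by rewrite /sp1 /sp2 E codeK /= decodeK.
Qed.

Lemma find_iota_eq (P : pred nat) N i : i < N -> P i -> (forall j, j < i -> ~~ P j) ->
  find P (iota 0 N) = i.
Proof.
move=> HiN HPi Hb.
have Hh : has P (iota 0 N) by apply/hasP; exists i => //; rewrite mem_iota.
have Hf : find P (iota 0 N) < N by have := has_find P (iota 0 N); rewrite Hh size_iota.
have HPf := nth_find 0 Hh; rewrite nth_iota // add0n in HPf.
case: (ltngtP (find P (iota 0 N)) i) => // H.
  by have := Hb _ H; rewrite HPf.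
by have := before_find 0 H; rewrite nth_iota // add0n HPi.
Qed.

Lemma sp1_bound m : 0 < m -> sp1 m < m.+1 /\ sp2 m < m.+1.
Proof.
move=> Hm; have E := sp_spec Hm.
have H1 := ltn_expl (sp1 m) (isT : 1 < 2).
have H2 : 0 < 2 ^ sp1 m by rewrite expn_gt0.
move: E H1 H2; set X := 2 ^ sp1 m; set a := sp1 m; set b := sp2 m; rewrite -!addnn.
move=> E H1 H2; split; nia.
Qed.

Lemma sp1_find m : sp1 m = if m == 0 then 0 else
  find (fun i => has (fun w => 2 ^ i * w.*2.+1 == m) (iota 0 m.+1)) (iota 0 m.+1).
Proof.
case: eqP => [->|/eqP Hm0] //; have Hm : 0 < m by rewrite lt0n.
have [B1 B2] := sp1_bound Hm.
symmetry; apply: find_iota_eq => //.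
  apply/hasP; exists (sp2 m); first by rewrite mem_iota.
  by rewrite -sp_spec.
move=> j Hj; apply/hasP => -[w _ /eqP Ew].
have := (sp_uniq j w).1; rewrite Ew => E; move: Hj; rewrite E ltnn //.
Qed.

Lemma sp2_find m : sp2 m = if m == 0 then 0 else
  find (fun w => 2 ^ sp1 m * w.*2.+1 == m) (iota 0 m.+1).
Proof.
case: eqP => [->|/eqP Hm0] //; have Hm : 0 < m by rewrite lt0n.
have [B1 B2] := sp1_bound Hm.
symmetry; apply: find_iota_eq => //; first by rewrite -sp_spec.
move=> j Hj; apply/negP => /eqP Ew.
have := (sp_uniq (sp1 m) j).2; rewrite Ew => E; move: Hj; rewrite E ltnn //.
Qed.

Section Comp4.
Context {O : nat -> bool}.
Local Notation CFn := (@CFn O).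

Lemma CFn_sp1 k g : CFn k g -> CFn k (fun v => sp1 (g v)).
Proof.
move=> Hg; apply: (app1 (F := sp1)) Hg.
have H : CFn 1 (fun v => if nth 0 v 0 == 0 then 0 else
  find (fun i => has (fun w => 2 ^ i * w.*2.+1 == nth 0 v 0) (iota 0 (nth 0 v 0).+1)) (iota 0 (nth 0 v 0).+1)).
  by cf.
apply: (CFn_ext H) => v _; by rewrite sp1_find.
Qed.

Lemma CFn_sp2 k g : CFn k g -> CFn k (fun v => sp2 (g v)).
Proof.
move=> Hg; apply: (app1 (F := sp2)) Hg.
have H1 : CFn 2 (fun v => sp1 (nth 0 (behead v) 0)).
  apply: CFn_sp1; cf.
have H : CFn 1 (fun v => if nth 0 v 0 == 0 then 0 else
  find (fun w => 2 ^ sp1 (nth 0 v 0) * w.*2.+1 == nth 0 v 0) (iota 0 (nth 0 v 0).+1)).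
  cf. all: try (apply: H1).
  all: try (apply: CFn_sp1; cf).
apply: (CFn_ext H) => v _; by rewrite sp2_find.
Qed.

End Comp4.

Lemma dvdn_has e a : (e %| a) = has (fun q => q * e == a) (iota 0 a.+1).
Proof.
apply/idP/hasP.
  case: e => [|e].
    rewrite dvd0n => /eqP ->; exists 0 => //; by rewrite mem_iota.
  move=> He; exists (a %/ e.+1); last by rewrite divnK.
  by rewrite mem_iota add0n ltnS leq_div.
move=> [q _ /eqP <-]; exact: dvdn_mull.
Qed.

Definition cop a b := ~~ has (fun e => (1 < e) && has (fun q => q * e == a) (iota 0 a.+1)
                                     && has (fun q => q * e == b) (iota 0 b.+1)) (iota 0 b.+1).

Lemma copE a b : 0 < b -> cop a b = coprime a b.
Proof.
move=> Hb; rewrite /cop.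
rewrite (@eq_has _ _ (fun e => (1 < e) && (e %| a) && (e %| b))); last first.
  by move=> e; rewrite !dvdn_has.
apply/idP/idP.
  apply: contraR => Hc; apply/hasP; exists (gcdn a b).
    rewrite mem_iota add0n ltnS; apply: dvdn_leq => //; exact: dvdn_gcdr.
  rewrite dvdn_gcdl dvdn_gcdr !andbT.
  have : 0 < gcdn a b by rewrite gcdn_gt0 Hb orbT.
  by move: Hc; rewrite /coprime; case: (gcdn a b) => [|[|g]].
move=> Hc; apply/hasP => -[e _ /andP [/andP [He Ha] Hbe]].
have : e %| gcdn a b by rewrite dvdn_gcd Ha Hbe.
move: Hc; rewrite /coprime => /eqP ->; rewrite dvdn1 => /eqP E; by rewrite E in He.
Qed.

Definition iok c := [&& 0 < c, 0 < sp2 c & sp2 (sp2 c) == 0] && ((0 < sp1 (sp2 c)) || (0 < sp1 c)).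
Definition ineg c := 0 < sp1 (sp2 c).
Definition ineg_val c := sp1 (sp1 (sp2 c)).
Definition ipos_val c := sp1 (sp1 c).
Definition ival c : int := if ineg c then Negz (ineg_val c) else Posz (ipos_val c).

Lemma decode0 : decode 0 = [::]. Proof. by []. Qed.

Lemma decode_eq0 m : (decode m == [::]) = (m == 0).
Proof.
apply/eqP/eqP => [E|->] //; by rewrite -(decodeK m) E.
Qed.

Lemma ohead_decode m : ohead (decode m) = if m == 0 then None else Some (sp1 m).
Proof.
case: eqP => [->|/eqP H] //; by rewrite decode_sp // lt0n.
Qed.

Lemma decode_len2 c : (exists a b, decode c = [:: a; b]) <->
   [&& 0 < c, 0 < sp2 c & sp2 (sp2 c) == 0].
Proof.
split.
  move=> [a [b E]].
  have Hc : 0 < c by rewrite lt0n -decode_eq0 E.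
  move: E; rewrite decode_sp // => -[_ E].
  have Hc2 : 0 < sp2 c by rewrite lt0n -decode_eq0 E.
  move: E; rewrite decode_sp // => -[_ E].
  by rewrite Hc Hc2 -decode_eq0 E.
move=> /and3P [H1 H2 /eqP H3]; exists (sp1 c), (sp1 (sp2 c)).
by rewrite decode_sp // decode_sp // H3.
Qed.

Lemma decode_len2' c : [&& 0 < c, 0 < sp2 c & sp2 (sp2 c) == 0] ->
  decode c = [:: sp1 c; sp1 (sp2 c)].
Proof. move=> /and3P [H1 H2 /eqP H3]; by rewrite decode_sp // decode_sp // H3. Qed.

Lemma unpickle_pair_nat (n : nat) (T : Type) (f : nat -> nat -> option T) :
  (if decode n is [:: a; b] then f a b else None) =
  if [&& 0 < n, 0 < sp2 n & sp2 (sp2 n) == 0] then f (sp1 n) (sp1 (sp2 n)) else None.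
Proof.
case H: [&& _, _ & _]; first by rewrite decode_len2'.
case E: (decode n) => [|a [|b [|c l]]] //.
have : [&& 0 < n, 0 < sp2 n & sp2 (sp2 n) == 0] by apply/decode_len2; exists a, b.
by rewrite H.
Qed.

Lemma pmap_Some_nat (l : seq nat) : pmap (@unpickle nat) l = l.
Proof. by elim: l => //= a l ->. Qed.
Lemma LT (I : countType) (T_ : I -> countType) n : (unpickle n : option {i : I & T_ i}) =
  if decode n is [:: ni; nx] then
    obind (fun i => omap (@Tagged I i T_) (unpickle nx)) (unpickle ni) else None.
Proof. reflexivity. Qed.
Lemma L2 (n : nat) : (unpickle n : option (option nat * option nat)) =
  if decode n is [:: a; b] then Some (ohead (decode a), ohead (decode b)) else None.
Proof. cbn; cbv [pcomp]; rewrite LT.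
case: (decode n) => [|a [|b [|c l]]] //=; by rewrite !pmap_Some_nat. Qed.
Lemma L3 (n : nat) : (unpickle n : option (nat + nat)) =
  if decode n is [:: a; b] then
    if ohead (decode b) is Some y then Some (inr y) else
    if ohead (decode a) is Some x then Some (inl x) else None
  else None.
Proof. cbn; cbv [pcomp]. rewrite L2.
case: (decode n) => [|a [|b [|c l]]] //=; by case: (ohead (decode a)); case: (ohead (decode b)). Qed.
Lemma L4 (n : nat) : (unpickle n : option int) =
  if decode n is [:: a; b] then
    if ohead (decode b) is Some y then Some (Negz y) else
    if ohead (decode a) is Some x then Some (Posz x) else None
  else None.
Proof. cbn; cbv [pcomp]. rewrite L3.
case: (decode n) => [|a [|b [|c l]]] //=; by case: (ohead (decode a)); case: (ohead (decode b)). Qed.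
Lemma L5 (n : nat) : (unpickle n : option (int * int)) =
  if decode n is [:: a; b] then
    obind (fun i : int => omap (fun j : int => (i,j)) (unpickle b)) (unpickle a) else None.
Proof. cbn; cbv [pcomp]. rewrite LT.
destruct (decode n) as [|a [|b [|c l]]] => //=. cbn. cbv [pcomp]. rewrite ?L3 ?L2.
case: (decode a) => [|a1 [|a2 [|? ?]]] //=; case: (decode b) => [|b1 [|b2 [|? ?]]] //=;
 try by case: (ohead (decode a1)); case: (ohead (decode a2)).
all: by case: (ohead (decode a1)); case: (ohead (decode a2)); case: (ohead (decode b1)); case: (ohead (decode b2)).
Qed.
Lemma L6 (n : nat) : (unpickle n : option rat) = obind insub (unpickle n : option (int*int)).
Proof. reflexivity. Qed.

Lemma unpickle_int c : (unpickle c : option int) = if iok c then Some (ival c) else None.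
Proof.
rewrite L4 (unpickle_pair_nat c (fun a b =>
    if ohead (decode b) is Some y then Some (Negz y) else
    if ohead (decode a) is Some x then Some (Posz x) else None)).
rewrite !ohead_decode /iok /ival /ineg /ineg_val /ipos_val.
case: [&& 0 < c, 0 < sp2 c & sp2 (sp2 c) == 0] => //=.
by case: (sp1 (sp2 c)) => [|y] //=; case: (sp1 c).
Qed.

Definition iabs c := if ineg c then (ineg_val c).+1 else ipos_val c.
Definition rden n := ipos_val (sp1 (sp2 n)).
Definition rok n := [&& 0 < n, 0 < sp2 n & sp2 (sp2 n) == 0] &&
  [&& iok (sp1 n), iok (sp1 (sp2 n)), ~~ ineg (sp1 (sp2 n)), 0 < rden n & cop (iabs (sp1 n)) (rden n)].

Lemma unpickle_rat_some n : rok n ->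
  exists q : rat, unpickle n = Some q /\ numq q = ival (sp1 n) /\ denq q = Posz (rden n).
Proof.
move=> /andP [/and3P [H1 H2 H3] /and5P [H4 H5 H6 H7 H8]].
rewrite L6 L5 decode_len2' ?H1 ?H2 ?H3 // !unpickle_int H4 H5 /=.
have Hv : ival (sp1 (sp2 n)) = Posz (rden n) by rewrite /ival (negbTE H6).
rewrite Hv.
case: insubP => /= [q _ Eq | Hn].
  by exists q; rewrite /numq /denq Eq.
exfalso; move: Hn; rewrite /= ltz_nat H7 /= -copE //.
suff -> : `|ival (sp1 n)|%N = iabs (sp1 n) by rewrite H8.
by rewrite /ival /iabs; case: (ineg _).
Qed.

Lemma unpickle_rat_none n : ~~ rok n -> (unpickle n : option rat) = None.
Proof.
rewrite L6 L5 (unpickle_pair_nat n (fun a b =>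
    obind (fun i : int => omap (fun j : int => (i,j)) (unpickle b)) (unpickle a))).
rewrite /rok; case: [&& 0 < n, 0 < sp2 n & sp2 (sp2 n) == 0] => //=.
rewrite !unpickle_int; case: (iok (sp1 n)) => //=; case: (iok (sp1 (sp2 n))) => //= Hn.
rewrite insubF //; apply/negbTE; apply: contra Hn => /andP [Hpos Hcop].
rewrite /= /ival in Hpos Hcop.
case E: (ineg (sp1 (sp2 n))) Hpos Hcop => //= Hpos Hcop.
rewrite ltz_nat in Hpos; rewrite -/(rden n) in Hpos Hcop *.
rewrite Hpos /= copE //.
suff <- : `|ival (sp1 n)|%N = iabs (sp1 n) by [].
by rewrite /ival /iabs; case: (ineg _).
Qed.

Definition encP m := code [:: code [:: m]; 0].
Definition encN k := code [:: 0; code [:: k]].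

Section Comp5.
Context {O : nat -> bool}.
Local Notation CFn := (@CFn O).

Lemma CFn_code1 k g : CFn k g -> CFn k (fun v => code [:: g v]).
Proof. move=> H; have Hx : CFn k (fun v => 2 ^ g v * 1) by cf. exact: (CFn_ext Hx). Qed.

Lemma CFn_code2 k g1 g2 : CFn k g1 -> CFn k g2 -> CFn k (fun v => code [:: g1 v; g2 v]).
Proof.
move=> H1 H2; have Hx : CFn k (fun v => 2 ^ g1 v * (2 ^ g2 v * 1).*2.+1) by cf.
exact: (CFn_ext Hx).
Qed.

Lemma CFn_pred k g : CFn k g -> CFn k (fun v => (g v).-1).
Proof. exact: (app1 (F := predn) CF_pred). Qed.

Lemma CFn_oracle' k g : CFn k g -> CFn k (fun v => nat_of_bool (O (g v))).
Proof. exact: CFn_oracle. Qed.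

End Comp5.

Ltac cf2 := lazymatch goal with
 | |- CFn _ (fun _ => _.-1) => apply: CFn_pred
 | |- CFn _ (fun _ => sp1 _) => apply: CFn_sp1
 | |- CFn _ (fun _ => sp2 _) => apply: CFn_sp2
 | |- CFn _ (fun _ => code [:: _]) => apply: CFn_code1
 | |- CFn _ (fun _ => code [:: _; _]) => apply: CFn_code2
 | |- @CFn ?O _ (fun _ => nat_of_bool (?O _)) => apply: CFn_oracle'
 | |- CFn _ (fun _ => encP _) => rewrite /encP
 | |- CFn _ (fun _ => encN _) => rewrite /encN
 | |- CFn _ (fun _ => nat_of_bool (rok _)) => rewrite /rok
 | |- CFn _ (fun _ => nat_of_bool (iok _)) => rewrite /iok
 | |- CFn _ (fun _ => nat_of_bool (ineg _)) => rewrite /ineg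
 | |- CFn _ (fun _ => nat_of_bool (cop _ _)) => rewrite /cop
 | |- CFn _ (fun _ => ipos_val _) => rewrite /ipos_val
 | |- CFn _ (fun _ => ineg_val _) => rewrite /ineg_val
 | |- CFn _ (fun _ => rden _) => rewrite /rden
 | |- CFn _ (fun _ => iabs _) => rewrite /iabs
 end.
Ltac cfx := repeat (cbv beta; first [ cf2 | cf1 ]).

Section Outs.
Variable O : nat -> bool.

Definition out1 n := if rok n then
  (if ~~ ineg (sp1 n) && (0 < ipos_val (sp1 n)) then
     (if rden n <= ipos_val (sp1 n)
      then nat_of_bool (O (code [:: encP (ipos_val (sp1 n) - rden n); encP (rden n)]))
      else nat_of_bool (O (code [:: encN (rden n - ipos_val (sp1 n)).-1; encP (ipos_val (sp1 n))])))
   else 1) else 0.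

Definition out2 n := if rok n then
  (if ~~ ineg (sp1 n)
   then nat_of_bool (O (code [:: encP (ipos_val (sp1 n) + rden n); encP (rden n)]))
   else nat_of_bool (O (code [:: encP (rden n); encP (rden n + (ineg_val (sp1 n)).+1)])))
  else 0.

Definition out3 n := if rok n then
  (if ineg (sp1 n) then
     (if ineg_val (sp1 n) < rden n
      then nat_of_bool (O (code [:: encP (rden n - (ineg_val (sp1 n)).+1); encP (ineg_val (sp1 n)).+1]))
      else nat_of_bool (O (code [:: encN (ineg_val (sp1 n) - rden n); encP (rden n)])))
   else 0) else 0.

Definition out4 n := if rok n then
  (if ~~ ineg (sp1 n)
   then nat_of_bool (O (code [:: encN (rden n).-1; encP (ipos_val (sp1 n) + rden n)]))
   else nat_of_bool (O (code [:: encN (rden n + ineg_val (sp1 n)); encP (rden n)])))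
  else 0.

Lemma CF_out1 : @CFn O 1 (fun v => out1 (nth 0 v 0)).
Proof. rewrite /out1. cfx. Qed.
Lemma CF_out2 : @CFn O 1 (fun v => out2 (nth 0 v 0)).
Proof. rewrite /out2. cfx. Qed.
Lemma CF_out3 : @CFn O 1 (fun v => out3 (nth 0 v 0)).
Proof. rewrite /out3. cfx. Qed.
Lemma CF_out4 : @CFn O 1 (fun v => out4 (nth 0 v 0)).
Proof. rewrite /out4. cfx. Qed.
End Outs.

Import Order.TTheory GRing.Theory Num.Theory.

Section Reals.
Local Open Scope ring_scope.
Variable R : realType.
Implicit Types x y p : R.

Definition Hf x : R := if 0 <= x then x + 1 else (1 - x)^-1.
Definition Ff x : R := - (Hf x)^-1.

Lemma Hf_gt0 x : 0 < Hf x.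
Proof. rewrite /Hf; case: ifP => H; [lra | rewrite invr_gt0; move/negbT: H; rewrite -ltNge; lra]. Qed.

Lemma Hf_lt1 x : x < 0 -> Hf x < 1.
Proof.
move=> Hx; rewrite /Hf lt_geF //.
rewrite invf_lt1; lra.
Qed.

Lemma Hf_ge1 x : 0 <= x -> 1 <= Hf x.
Proof. move=> Hx; rewrite /Hf Hx; lra. Qed.

Lemma HR1 x p : 1 <= p -> (p < Hf x) = (p - 1 < x).
Proof.
move=> Hp; case: (lerP 0 x) => Hx.
  rewrite /Hf Hx; apply/idP/idP => H; lra.
have := Hf_lt1 Hx => H1; apply/idP/idP => H; lra.
Qed.

Lemma HR2 x p : 0 < p -> p < 1 -> (p < Hf x) = (1 - p^-1 < x).
Proof.
move=> Hp0 Hp1; have Hi : 1 < p^-1 by rewrite invf_gt1.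
case: (lerP 0 x) => Hx.
  have := Hf_ge1 Hx => H1; apply/idP/idP => H; lra.
rewrite /Hf lt_geF //.
rewrite -[p in LHS]invrK ltf_pV2 ?posrE ?invr_gt0 //; last lra.
apply/idP/idP => H; lra.
Qed.

Lemma HR3 x p : p <= 0 -> p < Hf x.
Proof. have := Hf_gt0 x; lra. Qed.

Lemma Hf_lt x y : x < y -> Hf x < Hf y.
Proof.
move=> Hxy; rewrite /Hf.
case: (lerP 0 x) => Hx; case: (lerP 0 y) => Hy; try lra.
  have : (1 - x)^-1 < 1 by rewrite invf_lt1; lra.
  lra.
rewrite ltf_pV2 ?posrE; lra.
Qed.

Lemma Hf_mono x y : (x < y) = (Hf x < Hf y).
Proof.
case: (ltgtP x y) => H.
- by rewrite Hf_lt.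
- by apply/esym/negbTE; rewrite -leNgt ltW // Hf_lt.
- by rewrite H ltxx.
Qed.

Lemma Ff_mono x y : (x < y) = (Ff x < Ff y).
Proof.
rewrite Hf_mono /Ff ltrN2 ltf_pV2 ?posrE ?Hf_gt0 //.
Qed.

Lemma Ff_lt0 x : Ff x < 0.
Proof. rewrite /Ff oppr_lt0 invr_gt0; exact: Hf_gt0. Qed.

Lemma FR1 x p : p < 0 -> (p < Ff x) = ((- p)^-1 < Hf x).
Proof.
move=> Hp; rewrite /Ff -[p in LHS]opprK ltrN2.
rewrite -[(- p)^-1 < _]ltf_pV2 ?posrE ?invr_gt0 ?Hf_gt0 ?invrK //; lra.
Qed.

Lemma FR2 x p : 0 <= p -> (p < Ff x) = false.
Proof. move=> Hp; apply/negbTE; rewrite -leNgt; have := Ff_lt0 x; lra. Qed.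

End Reals.

Arguments sp1 : simpl never.
Arguments sp2 : simpl never.
Arguments encP : simpl never.
Arguments encN : simpl never.
Arguments code : simpl never.
Arguments real_code : simpl never.
Arguments rden : simpl never.
Arguments ipos_val : simpl never.
Arguments ineg_val : simpl never.
Arguments ineg : simpl never.

Lemma pickle_Posz m : pickle (Posz m) = encP m. Proof. reflexivity. Qed.
Lemma pickle_Negz m : pickle (Negz m) = encN m. Proof. reflexivity. Qed.

Lemma cpD a b : coprime (a + b) b = coprime a b.
Proof. by rewrite /coprime gcdnC addnC gcdnDl gcdnC. Qed.

Section G.
Variable R : realType.
Local Open Scope ring_scope.

Lemma intR (m : nat) : ((Posz m)%:~R : R) = m%:R.
Proof. by []. Qed.
Lemma intRN (k : nat) : ((Negz k)%:~R : R) = - (k.+1)%:R.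
Proof. by rewrite NegzE mulrNz. Qed.

Lemma rc_gen (x : R) n : real_code x n = rok n && ((ival (sp1 n))%:~R / (rden n)%:R < x).
Proof.
rewrite /real_code; case H: (rok n).
  have [q [E [En Ed]]] := unpickle_rat_some H.
  by rewrite E /ratr En Ed intR.
by rewrite unpickle_rat_none ?H.
Qed.

Lemma rc_pair (x : R) (i : int) (d : nat) : (0 < d)%N -> coprime `|i| d ->
  real_code x (code [:: pickle i; encP d]) = (i%:~R / d%:R < x).
Proof.
move=> Hd Hc.
have HP : (0 < (i, Posz d).2) && coprime `|(i, Posz d).1| `|(i, Posz d).2|.
  by rewrite /= ltz_nat Hd.
pose q := @Rat (i, Posz d) HP.
have Eq : pickle q = code [:: pickle i; encP d] by [].
by rewrite /real_code -Eq pickleK /ratr /= intR.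
Qed.


Lemma out1_ok (x : R) n : out1 (real_code x) n = nat_of_bool (real_code (Hf x) n).
Proof.
rewrite /out1 [real_code (Hf x) n]rc_gen; case Hr: (rok n) => //.
move: Hr => /andP [_ /and5P [_ _ _ Hd Hc]]; rewrite copE // in Hc.
rewrite /ival; move: Hc; rewrite /iabs andTb.
set a := sp1 n; set d := rden n.
have Hd' : (0 : R) < d%:R by rewrite ltr0n.
set m := ipos_val a; set k := ineg_val a.
move=> Hc; case: ifP => [/andP [Hneg Hm] | Hnm]; last first.
  rewrite HR3 //; case: (ineg a) Hnm => Hnm.
    rewrite intRN mulNr oppr_le0 divr_ge0 // ler0n //.
  have -> : m = 0%N by move: Hnm; rewrite andTb; lia.
  by rewrite intR mul0r.
rewrite (negbTE Hneg) in Hc *.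
have Hm' : (0 : R) < m%:R by rewrite ltr0n.
case: ifP => Hdm.
  rewrite -pickle_Posz.
  rewrite rc_pair //; last by rewrite /absz -cpD subnK.
  rewrite !intR HR1; last by rewrite ler_pdivlMr // mul1r ler_nat.
  rewrite natrB // mulrBl divff; last exact: lt0r_neq0.
  reflexivity.

rewrite -pickle_Negz.
have Hdm' : (m < d)%N by rewrite ltnNge Hdm.
rewrite rc_pair; [ | exact: Hm | ]; last first.
  have -> : `|Negz (d - m).-1|%N = (d - m)%N by rewrite /absz prednK ?subn_gt0.
  rewrite -cpD subnK; [rewrite coprime_sym; exact: Hc | exact: ltnW].
rewrite intRN intR prednK ?subn_gt0 // HR2; first last.
- by rewrite ltr_pdivrMr // mul1r ltr_nat.
- by rewrite divr_gt0.
congr (_ < _); rewrite natrB; last exact: ltnW.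
field; apply/andP; split; exact: lt0r_neq0.
Qed.

Lemma Hf_pos (v : R) : 0 <= v -> Hf v = v + 1.
Proof. by move=> H; rewrite /Hf H. Qed.
Lemma Hf_neg (v : R) : v < 0 -> Hf v = (1 - v)^-1.
Proof. by move=> H; rewrite /Hf lt_geF. Qed.

Lemma rok_facts n : rok n -> (0 < rden n)%N /\ coprime (iabs (sp1 n)) (rden n).
Proof. move=> /andP [_ /and5P [_ _ _ Hd Hc]]; by rewrite copE in Hc. Qed.

Lemma out2_ok (x : R) n : out2 (real_code (Hf x)) n = nat_of_bool (real_code x n).
Proof.
rewrite /out2 [real_code x n]rc_gen; case Hr: (rok n) => //.
have [Hd Hc] := rok_facts Hr; rewrite andTb.
rewrite /ival; move: Hc; rewrite /iabs.
set a := sp1 n; set d := rden n.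
have Hd' : (0 : R) < d%:R by rewrite ltr0n.
set m := ipos_val a; set k := ineg_val a.
move=> Hc; case: ifP => Hneg.
  rewrite (negbTE Hneg) in Hc *.
  rewrite -pickle_Posz rc_pair; [ | exact: Hd | by rewrite /absz cpD].
  rewrite !intR [(m%:R / d%:R < x)]Hf_mono (@Hf_pos (m%:R / d%:R)); last by rewrite divr_ge0 // ler0n.
  congr (_ < _); rewrite natrD mulrDl divff //; exact: lt0r_neq0.
move/negbFE: Hneg => Hneg; rewrite Hneg in Hc *.
rewrite -pickle_Posz rc_pair; [ | by rewrite addn_gt0 Hd | ]; last first.
  by rewrite /absz coprime_sym addnC cpD.
rewrite intR intRN [(_ < x)]Hf_mono (@Hf_neg (- k.+1%:R / d%:R)); last first.
  rewrite mulNr oppr_lt0 divr_gt0 // ltr0n //.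
have Hk : (0 : R) < k.+1%:R by rewrite ltr0n.
have -> : (1 - - k.+1%:R / d%:R)^-1 = d%:R / (d + k.+1)%:R :> R.
  rewrite natrD; field.
  have Hk0 : (0 : R) <= k%:R by rewrite ler0n.
  rewrite (lt0r_neq0 Hd') andbT; apply: lt0r_neq0; lra.
by [].
Qed.

Lemma out3_ok (x : R) n : out3 (real_code x) n = nat_of_bool (real_code (Ff x) n).
Proof.
rewrite /out3 [real_code (Ff x) n]rc_gen; case Hr: (rok n) => //.
have [Hd Hc] := rok_facts Hr; rewrite andTb.
rewrite /ival; move: Hc; rewrite /iabs.
set a := sp1 n; set d := rden n.
have Hd' : (0 : R) < d%:R by rewrite ltr0n.
set m := ipos_val a; set k := ineg_val a.
move=> Hc; case: ifP => Hneg; last first.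
  rewrite FR2 // intR divr_ge0 // ler0n //.
rewrite Hneg in Hc.
have Hk : (0 : R) < k.+1%:R by rewrite ltr0n.
rewrite intRN FR1; last by rewrite mulNr oppr_lt0 divr_gt0.
have -> : (- (- k.+1%:R / d%:R))^-1 = d%:R / k.+1%:R :> R.
  rewrite mulNr opprK invf_div //.
case: ifP => Hkd.
  rewrite -pickle_Posz rc_pair; [ | by [] | ]; last first.
    rewrite /absz -cpD subnK // coprime_sym //.
  rewrite intR HR1; last by rewrite ler_pdivlMr // mul1r ler_nat.
  rewrite natrB // mulrBl divff //; exact: lt0r_neq0.
have Hkd' : (d <= k)%N by rewrite leqNgt Hkd.
rewrite -pickle_Negz rc_pair; [ | exact: Hd | ]; last first.
  have -> : `|Negz (k - d)|%N = (k - d).+1 by [].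
  by rewrite -cpD addSn subnK.
rewrite intRN HR2; first last.
- by rewrite ltr_pdivrMr // mul1r ltr_nat ltnS.
- by rewrite divr_gt0.
have -> : - (k - d).+1%:R / d%:R = 1 - (d%:R / k.+1%:R)^-1 :> R.
  rewrite invf_div -subSn // natrB; last exact: leqW.
  field; exact: lt0r_neq0.
by [].
Qed.

Lemma out4_ok (x : R) n : out4 (real_code (Ff x)) n = nat_of_bool (real_code x n).
Proof.
rewrite /out4 [real_code x n]rc_gen; case Hr: (rok n) => //.
have [Hd Hc] := rok_facts Hr; rewrite andTb.
rewrite /ival; move: Hc; rewrite /iabs.
set a := sp1 n; set d := rden n.
have Hd' : (0 : R) < d%:R by rewrite ltr0n.
set m := ipos_val a; set k := ineg_val a.
move=> Hc; case: ifP => Hneg.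
  rewrite (negbTE Hneg) in Hc *.
  have Hmd : (0 < m + d)%N by rewrite addn_gt0 Hd orbT.
  rewrite -pickle_Negz rc_pair; [ | exact: Hmd | ]; last first.
    by rewrite /absz prednK // coprime_sym cpD.
  rewrite intR intRN prednK // [(m%:R / d%:R < x)]Ff_mono /Ff (@Hf_pos (m%:R / d%:R)); last first.
    by rewrite divr_ge0 // ler0n.
  have Hm0 : (0 : R) <= m%:R by rewrite ler0n.
  have -> : (m%:R / d%:R + 1)^-1 = d%:R / (m + d)%:R :> R.
    rewrite natrD; field; rewrite (lt0r_neq0 Hd') andbT; apply: lt0r_neq0; lra.
  by rewrite mulNr.
move/negbFE: Hneg => Hneg; rewrite Hneg in Hc *.
rewrite -pickle_Negz rc_pair; [ | exact: Hd | ]; last first.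
  have -> : `|Negz (d + k)|%N = (k.+1 + d)%N by rewrite /absz addSn addnC.
  rewrite cpD; exact: Hc.
have Hk : (0 : R) < k.+1%:R by rewrite ltr0n.
rewrite !intRN [(_ < x)]Ff_mono /Ff (@Hf_neg (- k.+1%:R / d%:R)); last first.
  rewrite mulNr oppr_lt0 divr_gt0 //.
have -> : ((1 - - k.+1%:R / d%:R)^-1)^-1 = (d + k).+1%:R / d%:R :> R.
  rewrite invrK -addnS natrD; field; exact: lt0r_neq0.
by rewrite mulNr.
Qed.

End G.

Lemma tle_out (A B : nat -> bool) (f : nat -> nat) :
  @CFn B 1 (fun v => f (nth 0 v 0)) -> (forall n, f n = nat_of_bool (A n)) -> turing_le A B.
Proof.
move=> [p Hp] Hf; exists p => n; have := Hp [:: n].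
rewrite tp_id //= Hf; by case: (A n).
Qed.

Section Main.
Variable R : realType.
Local Open Scope ring_scope.

Lemma teqH (x : R) : turing_eq (real_code x) (real_code (Hf x)).
Proof.
split.
  apply: (tle_out (@CF_out2 (real_code (Hf x)))) => n; exact: out2_ok.
apply: (tle_out (@CF_out1 (real_code x))) => n; exact: out1_ok.
Qed.

Lemma teqF (x : R) : turing_eq (real_code x) (real_code (Ff x)).
Proof.
split.
  apply: (tle_out (@CF_out4 (real_code (Ff x)))) => n; exact: out4_ok.
apply: (tle_out (@CF_out3 (real_code x))) => n; exact: out3_ok.
Qed.

Lemma Hf_inj : injective (@Hf R).
Proof.
move=> u v E; apply/eqP; rewrite eq_le !leNgt [v < u]Hf_mono [u < v]Hf_mono E ltxx //.
Qed.

Lemma Ff_inj : injective (@Ff R).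
Proof.
move=> u v E; apply/eqP; rewrite eq_le !leNgt [v < u]Ff_mono [u < v]Ff_mono E ltxx //.
Qed.

Lemma FH_neq (u v : R) : Ff u <> Hf v.
Proof. move=> E; have := Ff_lt0 u; have := Hf_gt0 v; rewrite E => H1 H2; lra. Qed.

End Main.

Theorem mainTheorem16 :
  forall (R : realType) (S : (nat -> bool) -> Prop),
    degree_invariant S ->
    ~ countable_degrees S ->
    ~ entangled2 S (reals_in_degrees (R := R) S).
Proof.
move=> R S Hinv _ [[I [e [Heq [HA Hinj]]]] H2].
have HAF : forall i, reals_in_degrees S (Ff (e i)).
  move=> i; exact: (Hinv _ _ (teqF (e i)) (HA i)).
have HAH : forall i, reals_in_degrees S (Hf (e i)).
  move=> i; exact: (Hinv _ _ (teqH (e i)) (HA i)).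
have [_ [a [b [H1 H3]]]] := H2 I (fun i => Ff (e i)) (fun i => Hf (e i)) Heq
  (fun i => conj (HAF i) (conj (HAH i) (@FH_neq R _ _)))
  (fun a b Hab => And4 (fun E => Hab (Hinj _ _ (Ff_inj E))) (@FH_neq R _ _)
                       (fun E => @FH_neq R _ _ (esym E)) (fun E => Hab (Hinj _ _ (Hf_inj E)))).
rewrite -Ff_mono in H1; rewrite -Hf_mono in H3.
have := lt_trans H1 H3; by rewrite ltxx.
Qed.
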